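(* Let $G$ be a Lindelöf $\omega$-stable Hausdorff topological group with $\psi(G)\leq\mathfrak c$. Then $w(G)\leq\mathfrak c$.
   Context: $\psi$ pseudocharacter, $w$ weight, $nw$ network weight, $\mathfrak c=2^\omega$. A Tychonoff space $X$ is $\kappa$-stable (for infinite $\kappa$) if every continuous image $Y$ of $X$ which admits a continuous one-to-one mapping onto a Tychonoff space $Z$ with $w(Z)\leq\kappa$ satisfies $nw(Y)\leq\kappa$. *)

(* Defs.v *)
From Stdlib Require Import Reals.
Open Scope R_scope.
Set Implicit Arguments.

Record topology (X : Type) := Topology {
  open : (X -> Prop) -> Prop;
  open_full : open (fun _ => True);
  open_inter : forall U V, open U -> open V -> open (fun x => U x /\ V x);
  open_union : forall F : (X -> Prop) -> Prop,
      (forall U, F U -> open U) -> open (fun x => exists U, F U /\ U x)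
}.
Arguments open {X} t U.

Definition closed {X : Type} (t : topology X) (F : X -> Prop) : Prop :=
  open t (fun x => ~ F x).

Definition card_le {T K : Type} (S : (T -> Prop) -> Prop) : Prop :=
  exists f : {A : T -> Prop | S A} -> K,
    forall a b, f a = f b -> proj1_sig a = proj1_sig b.
Arguments card_le {T} K S.

Definition continuous {X Y : Type} (tX : topology X) (tY : topology Y)
  (f : X -> Y) : Prop :=
  forall V, open tY V -> open tX (fun x => V (f x)).

Definition continuous_real {X : Type} (t : topology X) (f : X -> R) : Prop :=
  forall x eps, 0 < eps ->
    exists U, open t U /\ U x /\ forall y, U y -> Rabs (f y - f x) < eps.

Definition hausdorff {X : Type} (t : topology X) : Prop :=
  forall x y, x <> y -> exists U V, open t U /\ open t V /\ U x /\ V y /\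
    forall z, ~ (U z /\ V z).

Definition tychonoff {X : Type} (t : topology X) : Prop :=
  (forall x y : X, x <> y -> exists U, open t U /\ U y /\ ~ U x) /\
  (forall (F : X -> Prop) (x : X), closed t F -> ~ F x ->
     exists f : X -> R, continuous_real t f /\ f x = 0 /\
       forall y, F y -> f y = 1).

Definition lindelof {X : Type} (t : topology X) : Prop :=
  forall F : (X -> Prop) -> Prop, (forall U, F U -> open t U) ->
    (forall x, exists U, F U /\ U x) ->
    exists C : (X -> Prop) -> Prop, (forall U, C U -> F U) /\
      (forall x, exists U, C U /\ U x) /\ card_le nat C.

Definition is_base {X : Type} (t : topology X) (B : (X -> Prop) -> Prop) : Prop :=
  (forall V, B V -> open t V) /\
  forall U x, open t U -> U x -> exists V, B V /\ V x /\ forall y, V y -> U y.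

Definition is_network {X : Type} (t : topology X) (N : (X -> Prop) -> Prop) : Prop :=
  forall U x, open t U -> U x -> exists V, N V /\ V x /\ forall y, V y -> U y.

Definition weight_le (K : Type) {X : Type} (t : topology X) : Prop :=
  exists B, is_base t B /\ card_le K B.

Definition netweight_le (K : Type) {X : Type} (t : topology X) : Prop :=
  exists N, is_network t N /\ card_le K N.

Definition pseudochar_le (K : Type) {X : Type} (t : topology X) : Prop :=
  forall x : X, exists P : (X -> Prop) -> Prop,
    (forall U, P U -> open t U) /\ (forall U, P U -> U x) /\
    (forall y, (forall U, P U -> U y) -> y = x) /\ card_le K P.

Definition stable (K : Type) {X : Type} (tX : topology X) : Prop :=
  forall (Y : Type) (tY : topology Y) (f : X -> Y),
    continuous tX tY f -> (forall y, exists x, f x = y) ->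
  forall (Z : Type) (tZ : topology Z) (g : Y -> Z),
    continuous tY tZ g ->
    (forall a b, g a = g b -> a = b) -> (forall z, exists y, g y = z) ->
    tychonoff tZ -> weight_le K tZ ->
    netweight_le K tY.

(* cardinals omega and c = 2^omega, represented by types *)
Definition omega_t : Type := nat.
Definition continuum_t : Type := nat -> bool.

Record topological_group {G : Type} (t : topology G)
  (mul : G -> G -> G) (inv : G -> G) (e : G) : Prop := {
  tg_assoc : forall x y z, mul x (mul y z) = mul (mul x y) z;
  tg_unit_l : forall x, mul e x = x;
  tg_unit_r : forall x, mul x e = x;
  tg_inv_l : forall x, mul (inv x) x = e;
  tg_inv_r : forall x, mul x (inv x) = e;
  (* multiplication G x G -> G continuous (product topology, unfolded) *)
  tg_mul_cont : forall x y W, open t W -> W (mul x y) ->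
     exists U V, open t U /\ open t V /\ U x /\ V y /\
       forall a b, U a -> V b -> W (mul a b);
  tg_inv_cont : continuous t t inv
}.

(* Main.v *)
Require Import Defs.
From Stdlib Require Import Arith Reals Lra Lia List ClassicalEpsilon FunctionalExtensionality PropExtensionality ProofIrrelevance Classical.
From Stdlib Require Cantor.
Import ListNotations.
Open Scope R_scope.


Lemma pred_ext {X} (U W : X -> Prop) : (forall x, U x <-> W x) -> U = W.
Proof. intro H; apply functional_extensionality; intro x; apply propositional_extensionality; auto. Qed.

Lemma open_ext {X} (t : topology X) (U W : X -> Prop) :
  (forall x, U x <-> W x) -> open t U -> open t W.
Proof. intros H HU; rewrite <- (pred_ext U W H); exact HU. Qed.

Lemma open_of_nbhd {X} (t : topology X) (U : X -> Prop) :
  (forall x, U x -> exists W, open t W /\ W x /\ forall y, W y -> U y) -> open t U.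
Proof.
  intro H.
  apply open_ext with (U := fun x => exists W, (open t W /\ forall y, W y -> U y) /\ W x).
  - intro x; split.
    + intros [W [[_ HW] Wx]]; auto.
    + intro Ux; destruct (H x Ux) as [W [? [? ?]]]; exists W; auto.
  - apply open_union; intros W [? _]; auto.
Qed.


Lemma g_inv_inv {G} {t : topology G} {mul inv e} (TG : topological_group t mul inv e) x :
  inv (inv x) = x.
Proof.
  rewrite <- (tg_unit_r TG (inv (inv x))), <- (tg_inv_l TG x), (tg_assoc TG), (tg_inv_l TG), (tg_unit_l TG); auto.
Qed.

Lemma g_cancel_l {G} {t : topology G} {mul inv e} (TG : topological_group t mul inv e) x y :
  mul (inv x) (mul x y) = y.
Proof. rewrite (tg_assoc TG), (tg_inv_l TG), (tg_unit_l TG); auto. Qed.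

Lemma g_cancel_l' {G} {t : topology G} {mul inv e} (TG : topological_group t mul inv e) x y :
  mul x (mul (inv x) y) = y.
Proof. rewrite (tg_assoc TG), (tg_inv_r TG), (tg_unit_l TG); auto. Qed.

Lemma g_inv_mul {G} {t : topology G} {mul inv e} (TG : topological_group t mul inv e) x y :
  inv (mul x y) = mul (inv y) (inv x).
Proof.
  assert (H : mul (mul x y) (mul (inv y) (inv x)) = e).
  { rewrite <- (tg_assoc TG), (g_cancel_l' TG), (tg_inv_r TG); auto. }
  rewrite <- (tg_unit_r TG (inv (mul x y))), <- H, (tg_assoc TG), (tg_inv_l TG), (tg_unit_l TG); auto.
Qed.

Lemma g_inv_e {G} {t : topology G} {mul inv e} (TG : topological_group t mul inv e) :
  inv e = e.
Proof. rewrite <- (tg_unit_r TG (inv e)), (tg_inv_l TG); auto. Qed.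

Lemma open_lmul {G} {t : topology G} {mul inv e} (TG : topological_group t mul inv e) a W :
  open t W -> open t (fun x => W (mul a x)).
Proof.
  intro HW; apply open_of_nbhd; intros x Hx.
  destruct (tg_mul_cont TG a x W HW Hx) as [U [V [_ [HV [Ua [Vx H]]]]]].
  exists V; auto.
Qed.

Lemma open_rmul {G} {t : topology G} {mul inv e} (TG : topological_group t mul inv e) b W :
  open t W -> open t (fun x => W (mul x b)).
Proof.
  intro HW; apply open_of_nbhd; intros x Hx.
  destruct (tg_mul_cont TG x b W HW Hx) as [U [V [HU [_ [Ux [Vb H]]]]]].
  exists U; auto.
Qed.

Lemma nbhd2 {G} {t : topology G} {mul inv e} (TG : topological_group t mul inv e) U :
  open t U -> U e -> exists W, open t W /\ W e /\ forall a b, W a -> W b -> U (mul a b).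
Proof.
  intros HU Ue.
  assert (U (mul e e)) by (rewrite (tg_unit_l TG); auto).
  destruct (tg_mul_cont TG e e U HU H) as [A [B [HA [HB [Ae [Be Hab]]]]]].
  exists (fun x => A x /\ B x); split; [apply open_inter; auto|].
  split; [auto|]. intros a b [? _] [_ ?]; auto.
Qed.

Lemma nbhd_cube {G} {t : topology G} {mul inv e} (TG : topological_group t mul inv e) U :
  open t U -> U e -> exists V, open t V /\ V e /\ (forall x, V x -> V (inv x)) /\
    forall a b c, V a -> V b -> V c -> U (mul a (mul b c)).
Proof.
  intros HU Ue.
  destruct (nbhd2 TG U HU Ue) as [W [HW [We HW2]]].
  destruct (nbhd2 TG W HW We) as [W' [HW' [W'e HW'2]]].
  set (V0 := fun x => W x /\ W' x).
  assert (HV0 : open t V0) by (apply open_inter; auto).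
  exists (fun x => V0 x /\ V0 (inv x)).
  split; [apply open_inter; auto; apply (tg_inv_cont TG); auto|].
  split; [unfold V0; rewrite (g_inv_e TG); tauto|].
  split.
  - intros x [? ?]; split; auto. rewrite (g_inv_inv TG); auto.
  - intros a b c [[Wa _] _] [[_ Wb] _] [[_ Wc] _]. apply HW2; auto.
Qed.

Definition adm {G} (t : topology G) (mul : G -> G -> G) (inv : G -> G) (e : G) (V : nat -> G -> Prop) :=
  forall n, open t (V n) /\ V n e /\ (forall x, V n x -> V n (inv x)) /\
    (forall a b c, V (S n) a -> V (S n) b -> V (S n) c -> V n (mul a (mul b c))).

Lemma adm_mono {G} {t : topology G} {mul inv e} (TG : topological_group t mul inv e) V :
  adm t mul inv e V -> forall m n, (m <= n)%nat -> forall x, V n x -> V m x.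
Proof.
  intros HA m n Hmn; induction Hmn; auto.
  intros x Hx; apply IHHmn.
  destruct (HA m0) as [_ [_ [_ H3]]].
  destruct (HA (S m0)) as [_ [He _]].
  specialize (H3 x e e Hx He He).
  rewrite (tg_unit_l TG), (tg_unit_r TG) in H3; auto.
Qed.

Fixpoint iterV {G} (s : (G -> Prop) -> (G -> Prop)) (U : G -> Prop) (n : nat) : G -> Prop :=
  match n with O => s U | S m => s (iterV s U m) end.

Lemma exists_seq {G} {t : topology G} {mul inv e} (TG : topological_group t mul inv e) U :
  open t U -> U e -> exists V, adm t mul inv e V /\ forall x, V O x -> U x.
Proof.
  intros HU Ue.
  assert (Hs : forall W : G -> Prop, exists V, open t W -> W e -> (open t V /\ V e /\ (forall x, V x -> V (inv x)) /\
    forall a b c, V a -> V b -> V c -> W (mul a (mul b c)))).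
  { intro W. destruct (classic (open t W /\ W e)) as [[H1 H2]|H].
    - destruct (nbhd_cube TG W H1 H2) as [V HV]; exists V; auto.
    - exists W; intros; exfalso; auto. }
  set (s := fun W => proj1_sig (constructive_indefinite_description _ (Hs W))).
  assert (Hsp : forall W, open t W -> W e -> (open t (s W) /\ s W e /\ (forall x, s W x -> s W (inv x)) /\
    forall a b c, s W a -> s W b -> s W c -> W (mul a (mul b c)))).
  { intros W H1 H2; unfold s; destruct (constructive_indefinite_description _ (Hs W)); simpl; auto. }
  assert (Hall : forall n, open t (iterV s U n) /\ iterV s U n e).
  { induction n; simpl.
    - destruct (Hsp U) as [? [? _]]; auto.
    - destruct IHn; destruct (Hsp (iterV s U n)) as [? [? _]]; auto. }
  exists (iterV s U). split.
  - intro n. destruct (Hall n) as [H1 H2].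
    destruct (Hsp (iterV s U n) H1 H2) as [_ [_ [_ H4]]].
    split; [auto|split; [auto|split]].
    + destruct n; simpl.
      * destruct (Hsp U) as [_ [_ [? _]]]; auto.
      * destruct (Hall n); destruct (Hsp (iterV s U n)) as [_ [_ [? _]]]; auto.
    + intros a b c Ha Hb Hc; apply H4; auto.
  - intros x Hx. destruct (Hsp U HU Ue) as [_ [He [_ H4]]].
    specialize (H4 x e e Hx He He). rewrite (tg_unit_l TG), (tg_unit_r TG) in H4; auto.
Qed.

Lemma open_finite_inter {X} (t : topology X) (Q : nat -> X -> Prop) :
  (forall k, open t (Q k)) -> forall n, open t (fun x => forall k, (k <= n)%nat -> Q k x).
Proof.
  intros HQ n; induction n.
  - apply open_ext with (U := Q O); auto.
    intro x; split; [intros H k Hk; replace k with O by lia; auto | intro H; apply H; lia].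
  - apply open_ext with (U := fun x => (forall k, (k <= n)%nat -> Q k x) /\ Q (S n) x).
    + intro x; split.
      * intros [H1 H2] k Hk. destruct (Nat.eq_dec k (S n)); [subst; auto| apply H1; lia].
      * intros H; split; [intros; apply H; lia| apply H; lia].
    + apply open_inter; auto.
Qed.

Lemma adm_inter {G} {t : topology G} {mul inv e} (TG : topological_group t mul inv e)
  (Va : nat -> nat -> G -> Prop) :
  (forall k, adm t mul inv e (Va k)) ->
  adm t mul inv e (fun n x => forall k, (k <= n)%nat -> Va k n x).
Proof.
  intros HA n. split; [|split; [|split]].
  - apply (open_finite_inter t (fun k => Va k n)); intro k; apply (HA k n).
  - intros k _; apply (HA k n).
  - intros x Hx k Hk; apply (HA k n); auto.
  - intros a b c Ha Hb Hc k Hk; apply (HA k n); auto.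
Qed.

Definition w (m : nat) : R := / 2 ^ m.

Lemma w_pos m : 0 < w m.
Proof. unfold w; apply Rinv_0_lt_compat, pow_lt; lra. Qed.

Lemma w_S m : w (S m) = w m / 2.
Proof. unfold w; simpl. rewrite Rinv_mult. field. apply pow_nonzero; lra. Qed.

Lemma w_le1 m : w m <= 1.
Proof. induction m; [unfold w; simpl; lra|rewrite w_S; pose proof (w_pos m); lra]. Qed.

Lemma w_lt m n : (m < n)%nat -> w n < w m.
Proof.
  intro H; induction H.
  - rewrite w_S; pose proof (w_pos m); lra.
  - rewrite w_S; pose proof (w_pos m0); lra.
Qed.

Lemma w_small eps : 0 < eps -> exists n, w n < eps.
Proof.
  intro He. destruct (archimed (/ eps)) as [H1 _].
  assert (Hz : (0 <= up (/eps))%Z).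
  { apply le_IZR. pose proof (Rinv_0_lt_compat _ He). simpl; lra. }
  destruct (IZN _ Hz) as [k Hk]. exists k.
  rewrite Hk, <- INR_IZR_INZ in H1.
  assert (Hk2 : INR k <= 2 ^ k).
  { clear. induction k; [simpl; lra|]. rewrite S_INR; simpl.
    assert (1 <= 2 ^ k) by (apply pow_R1_Rle; lra). lra. }
  unfold w. apply Rlt_le_trans with (/ (/ eps)).
  - apply Rinv_lt_contravar; [|lra]. apply Rmult_lt_0_compat; [apply Rinv_0_lt_compat; lra|].
    apply pow_lt; lra.
  - rewrite Rinv_inv; lra.
Qed.


Definition prodl {G} (mul : G -> G -> G) (e : G) (l : list (G * nat)) : G :=
  fold_right (fun p acc => mul (fst p) acc) e l.
Definition wsum {G} (l : list (G * nat)) : R := fold_right (fun p acc => w (snd p) + acc) 0 l.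
Definition valid {G} (V : nat -> G -> Prop) (l : list (G * nat)) := Forall (fun p => V (snd p) (fst p)) l.

Lemma wsum_app {G} (l1 l2 : list (G * nat)) : wsum (l1 ++ l2) = wsum l1 + wsum l2.
Proof. induction l1; simpl; [lra|]. unfold wsum in *; simpl; rewrite IHl1; lra. Qed.

Lemma wsum_nonneg {G} (l : list (G * nat)) : 0 <= wsum l.
Proof. induction l; simpl; [lra|]. unfold wsum in *; simpl. pose proof (w_pos (snd a)); lra. Qed.

Lemma wsum_zero {G} (l : list (G * nat)) : wsum l <= 0 -> l = [].
Proof. destruct l; auto. unfold wsum; simpl. intro H. pose proof (w_pos (snd p)); pose proof (wsum_nonneg l); unfold wsum in *; lra. Qed.

Lemma prodl_app {G} {t : topology G} {mul inv e} (TG : topological_group t mul inv e) l1 l2 :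
  prodl mul e (l1 ++ l2) = mul (prodl mul e l1) (prodl mul e l2).
Proof.
  induction l1; simpl; [rewrite (tg_unit_l TG); auto|].
  unfold prodl in *; simpl; rewrite IHl1, (tg_assoc TG); auto.
Qed.

Lemma split_list {G} (l : list (G * nat)) c : l <> [] -> 0 <= c <= wsum l ->
  exists l1 p l2, l = l1 ++ p :: l2 /\ wsum l1 <= c /\ c <= wsum l1 + w (snd p).
Proof.
  revert c; induction l as [|y l IH]; intros c Hne Hc; [congruence|].
  destruct (Rle_dec c (w (snd y))).
  - exists [], y, l; split; [reflexivity|]; unfold wsum; simpl; lra.
  - assert (Hl : l <> []).
    { intro; subst; unfold wsum in Hc; simpl in Hc; lra. }
    destruct (IH (c - w (snd y)) Hl) as [l1 [p [l2 [E [H1 H2]]]]].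
    { unfold wsum in Hc |- *; simpl in Hc; lra. }
    exists (y :: l1), p, l2; subst; split; [reflexivity|]; unfold wsum in *; simpl in *; lra.
Qed.

Lemma chain_lemma {G} {t : topology G} {mul inv e} (TG : topological_group t mul inv e) V :
  adm t mul inv e V -> forall l, valid V l -> forall n, wsum l <= w n -> V n (prodl mul e l).
Proof.
  intros HA.
  assert (H : forall k l, (length l <= k)%nat -> valid V l -> forall n, wsum l <= w n -> V n (prodl mul e l)).
  2: { intros l; apply (H (length l)); auto. }
  induction k; intros l Hlen Hv n Hs.
  - destruct l; [|simpl in Hlen; lia]. simpl. apply (HA n).
  - destruct l as [|q l'].
    + simpl; apply (HA n).
    + set (l := q :: l') in *.
      assert (Hne : l <> []) by discriminate.
      destruct (split_list l (wsum l / 2) Hne) as [l1 [p [l2 [E [H1 H2]]]]].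
      { pose proof (wsum_nonneg l); lra. }
      rewrite E in Hv, Hlen, Hs |- *.
      rewrite wsum_app in Hs; unfold wsum in Hs at 2; simpl in Hs; fold (wsum l2) in Hs.
      rewrite length_app in Hlen; simpl in Hlen.
      apply Forall_app in Hv; destruct Hv as [Hv1 Hv2]; inversion Hv2; subst.
      assert (Hsum : wsum l = wsum l1 + w (snd p) + wsum l2).
      { rewrite E, wsum_app; unfold wsum at 2; simpl; fold (wsum l2); lra. }
      rewrite (prodl_app TG); simpl.
      destruct p as [x m]; simpl in *.
      destruct (lt_eq_lt_dec m n) as [[Hlt|Heq]|Hgt].
      * exfalso. pose proof (w_lt _ _ Hlt). pose proof (wsum_nonneg l1); pose proof (wsum_nonneg l2); lra.
      * subst m. assert (l1 = []) by (apply wsum_zero; pose proof (wsum_nonneg l2); lra).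
        assert (l2 = []) by (apply wsum_zero; pose proof (wsum_nonneg l1); lra).
        subst; simpl. rewrite (tg_unit_l TG), (tg_unit_r TG); auto.
      * apply (HA n).
        -- apply IHk; [lia|auto|]. rewrite w_S. lra.
        -- apply (adm_mono TG V HA (S n) m); auto.
        -- apply IHk; [lia|auto|]. rewrite w_S. lra.
Qed.

Definition Eset {G} (V : nat -> G -> Prop) (mul : G -> G -> G) (e : G) (x : G) (s : R) : Prop :=
  s = 1 \/ exists l, valid V l /\ prodl mul e l = x /\ wsum l = s.

Lemma Eset_nonneg {G} V mul e (x : G) s : Eset V mul e x s -> 0 <= s.
Proof. intros [->|[l [_ [_ <-]]]]; [lra|apply wsum_nonneg]. Qed.

Lemma Ebound {G} V mul e (x : G) : bound (fun r => Eset V mul e x (- r)).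
Proof. exists 0. intros r Hr. apply Eset_nonneg in Hr; lra. Qed.

Lemma Ene {G} V mul e (x : G) : exists r, Eset V mul e x (- r).
Proof. exists (-1). left; lra. Qed.

Definition pp {G} V mul e (x : G) : R :=
  - proj1_sig (completeness _ (Ebound V mul e x) (Ene V mul e x)).

Lemma pp_le {G} V mul e (x : G) s : Eset V mul e x s -> pp V mul e x <= s.
Proof.
  intro H. unfold pp. destruct (completeness (fun r => Eset V mul e x (- r)) (Ebound V mul e x) (Ene V mul e x)) as [m Hm]; simpl; destruct Hm as [Hub Hl].
  assert (- s <= m) by (apply Hub; rewrite Ropp_involutive; auto). lra.
Qed.

Lemma pp_nonneg {G} V mul e (x : G) : 0 <= pp V mul e x.
Proof.
  unfold pp. destruct (completeness (fun r => Eset V mul e x (- r)) (Ebound V mul e x) (Ene V mul e x)) as [m Hm]; simpl; destruct Hm as [Hub Hl].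
  assert (m <= 0). { apply Hl. intros r Hr. apply Eset_nonneg in Hr; lra. } lra.
Qed.

Lemma pp_approx {G} V mul e (x : G) eps : 0 < eps ->
  exists s, Eset V mul e x s /\ s < pp V mul e x + eps.
Proof.
  intro He. unfold pp. destruct (completeness (fun r => Eset V mul e x (- r)) (Ebound V mul e x) (Ene V mul e x)) as [m Hm]; simpl; destruct Hm as [Hub Hl].
  apply NNPP; intro Hn.
  assert (m <= m - eps).
  { apply Hl. intros r Hr. apply Rnot_lt_le. intro Hlt. apply Hn. exists (- r); split; auto. lra. }
  lra.
Qed.

Lemma pp_sub {G} {t : topology G} {mul inv e} (TG : topological_group t mul inv e) V x y :
  pp V mul e (mul x y) <= pp V mul e x + pp V mul e y.
Proof.
  apply Rnot_lt_le; intro Hlt.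
  set (eps := (pp V mul e (mul x y) - (pp V mul e x + pp V mul e y)) / 2).
  assert (He : 0 < eps) by (unfold eps; lra).
  destruct (pp_approx V mul e x eps He) as [s1 [H1 L1]].
  destruct (pp_approx V mul e y eps He) as [s2 [H2 L2]].
  assert (pp V mul e (mul x y) <= s1 + s2).
  { destruct H1 as [->|[l1 [V1 [P1 W1]]]].
    - apply Eset_nonneg in H2. pose proof (pp_le V mul e (mul x y) 1 (or_introl eq_refl)). lra.
    - destruct H2 as [->|[l2 [V2 [P2 W2]]]].
      + pose proof (wsum_nonneg l1). pose proof (pp_le V mul e (mul x y) 1 (or_introl eq_refl)). lra.
      + apply pp_le. right. exists (l1 ++ l2). split; [apply Forall_app; auto|].
        rewrite (prodl_app TG), wsum_app, P1, P2, W1, W2; auto. }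
  unfold eps in *; lra.
Qed.

Lemma pp_inv_le {G} {t : topology G} {mul inv e} (TG : topological_group t mul inv e) V :
  adm t mul inv e V -> forall x, pp V mul e (inv x) <= pp V mul e x.
Proof.
  intros HA x. apply Rnot_lt_le; intro Hlt.
  set (eps := pp V mul e (inv x) - pp V mul e x).
  assert (He : 0 < eps) by (unfold eps; lra).
  destruct (pp_approx V mul e x eps He) as [s [Hs L]].
  assert (pp V mul e (inv x) <= s).
  { apply pp_le. destruct Hs as [->|[l [Vl [Pl Wl]]]]; [left; auto|right].
    exists (rev (map (fun q => (inv (fst q), snd q)) l)).
    assert (Hw : forall l : list (G * nat), wsum (rev l) = wsum l).
    { induction l0; auto. simpl. rewrite wsum_app, IHl0. unfold wsum; simpl; lra. }
    split; [|split].
    - unfold valid. apply Forall_rev. apply Forall_map. unfold valid in Vl.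
      eapply Forall_impl; [|exact Vl]. intros [a m]; simpl; apply (HA m).
    - subst x. clear -TG. induction l; simpl.
      + rewrite (g_inv_e TG); auto.
      + rewrite (prodl_app TG), IHl. simpl. rewrite (tg_unit_r TG), (g_inv_mul TG); auto.
    - rewrite Hw. rewrite <- Wl. clear. induction l; auto. unfold wsum in *; simpl. rewrite IHl; auto. }
  unfold eps in *; lra.
Qed.

Lemma pp_inv {G} {t : topology G} {mul inv e} (TG : topological_group t mul inv e) V :
  adm t mul inv e V -> forall x, pp V mul e (inv x) = pp V mul e x.
Proof.
  intros HA x. apply Rle_antisym; [apply (pp_inv_le TG V HA)|].
  rewrite <- (g_inv_inv TG x) at 1. apply (pp_inv_le TG V HA).
Qed.

Lemma pp_Vn {G} {t : topology G} {mul inv e} (TG : topological_group t mul inv e) V (x : G) n :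
  V n x -> pp V mul e x <= w n.
Proof.
  intro H. apply pp_le. right. exists [(x, n)]. split; [constructor; auto|].
  unfold prodl, wsum; simpl. split; [apply (tg_unit_r TG)|lra].
Qed.

Lemma pp_small {G} {t : topology G} {mul inv e} (TG : topological_group t mul inv e) V :
  adm t mul inv e V -> forall x n, pp V mul e x < w n -> V n x.
Proof.
  intros HA x n H.
  destruct (pp_approx V mul e x (w n - pp V mul e x)) as [s [Hs L]]; [lra|].
  destruct Hs as [->|[l [Vl [Pl Wl]]]].
  - pose proof (w_le1 n); lra.
  - subst x. apply (chain_lemma TG V HA l Vl). lra.
Qed.

Lemma pp_e {G} V mul (e : G) : pp V mul e e = 0.
Proof.
  apply Rle_antisym; [|apply pp_nonneg]. apply pp_le. right. exists []. split; [constructor|]. auto.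
Qed.

Lemma sig_eq {A} {P : A -> Prop} (a b : {x | P x}) : proj1_sig a = proj1_sig b -> a = b.
Proof. destruct a as [a Ha], b as [b Hb]; simpl; intro; subst; f_equal; apply proof_irrelevance. Qed.

Section PM.
Context {G : Type} {t : topology G} {mul : G -> G -> G} {inv : G -> G} {e : G}
  (TG : topological_group t mul inv e) (V : nat -> G -> Prop) (HA : adm t mul inv e V).

Definition dd (x y : G) : R := pp V mul e (mul (inv x) y).

Lemma dd_refl x : dd x x = 0.
Proof. unfold dd; rewrite (tg_inv_l TG); apply pp_e. Qed.

Lemma dd_nonneg x y : 0 <= dd x y.
Proof. apply pp_nonneg. Qed.

Lemma dd_sym x y : dd x y = dd y x.
Proof.
  unfold dd. rewrite <- (pp_inv TG V HA (mul (inv x) y)), (g_inv_mul TG), (g_inv_inv TG); auto.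
Qed.

Lemma dd_tri x y z : dd x z <= dd x y + dd y z.
Proof.
  unfold dd. replace (mul (inv x) z) with (mul (mul (inv x) y) (mul (inv y) z)).
  - apply (pp_sub TG).
  - rewrite <- (tg_assoc TG), (g_cancel_l' TG); auto.
Qed.

Lemma dd_small x y n : dd x y < w n -> V n (mul (inv x) y).
Proof. apply (pp_small TG V HA). Qed.

Lemma dd_Vn x y n : V n (mul (inv x) y) -> dd x y <= w n.
Proof. apply (pp_Vn TG). Qed.

Lemma ball_open x r : open t (fun y => dd x y < r).
Proof.
  apply open_of_nbhd; intros y0 Hy0.
  destruct (w_small (r - dd x y0)) as [n Hn]; [lra|].
  exists (fun z => V n (mul (inv y0) z)). split; [apply (open_lmul TG); apply (HA n)|].
  split; [rewrite (tg_inv_l TG); apply (HA n)|].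
  intros z Hz. pose proof (dd_Vn _ _ _ Hz). pose proof (dd_tri x y0 z). lra.
Qed.

Lemma separable : lindelof t -> forall n, exists c : nat -> G, forall y, exists k, V n (mul (inv (c k)) y).
Proof.
  intros HL n.
  set (tr := fun x => fun y => V n (mul (inv x) y)).
  destruct (HL (fun W => exists x, W = tr x)) as [C [HC1 [HC2 [code Hcode]]]].
  - intros U [x ->]. apply (open_lmul TG); apply (HA n).
  - intro x. exists (tr x). split; [exists x; auto|]. unfold tr; rewrite (tg_inv_l TG); apply (HA n).
  - exists (fun k => epsilon (inhabits e) (fun x => exists W (H : C W), code (exist _ W H) = k /\ W = tr x)).
    intro y. destruct (HC2 y) as [W [CW Wy]]. exists (code (exist _ W CW)).
    set (P := fun x => exists W0 (H : C W0), code (exist _ W0 H) = code (exist _ W CW) /\ W0 = tr x).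
    assert (HP : exists x, P x).
    { destruct (HC1 W CW) as [x Hx]. exists x. exists W, CW. auto. }
    pose proof (epsilon_spec (inhabits e) P HP) as [W0 [H0 [Hc Ht]]].
    fold P. apply Hcode in Hc. simpl in Hc. subst W0. rewrite Ht in Wy. exact Wy.
Qed.

Definition cls (x : G) : G -> Prop := fun y => dd x y = 0.
Definition QT : Type := {P : G -> Prop | exists x, P = cls x}.
Definition piq (x : G) : QT := exist _ (cls x) (ex_intro _ x eq_refl).
Definition rep (q : QT) : G := proj1_sig (constructive_indefinite_description _ (proj2_sig q)).

Lemma piq_rep q : piq (rep q) = q.
Proof.
  apply sig_eq. unfold rep, piq; simpl.
  destruct (constructive_indefinite_description _ (proj2_sig q)); simpl; auto.
Qed.

Lemma piq_eq x y : dd x y = 0 -> piq x = piq y.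
Proof.
  intro H. apply sig_eq; simpl. apply pred_ext; intro z; unfold cls. split; intro Hz.
  - pose proof (dd_tri y x z). rewrite dd_sym in H. pose proof (dd_nonneg y z). lra.
  - pose proof (dd_tri x y z). pose proof (dd_nonneg x z). lra.
Qed.

Lemma piq_inj x y : piq x = piq y -> dd x y = 0.
Proof.
  intro H. apply (f_equal (fun q => proj1_sig q y)) in H. simpl in H.
  unfold cls in H. rewrite H. apply dd_refl.
Qed.

Lemma dd_rep a x : dd a (rep (piq x)) = dd a x.
Proof.
  assert (H : dd x (rep (piq x)) = 0) by (apply piq_inj; rewrite piq_rep; auto).
  pose proof (dd_tri a x (rep (piq x))). pose proof (dd_tri a (rep (piq x)) x).
  pose proof H as H2. rewrite dd_sym in H2. lra.
Qed.

End PM.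

Section QTop.
Context {G : Type} {t : topology G} {mul : G -> G -> G} {inv : G -> G} {e : G}
  (TG : topological_group t mul inv e) (V : nat -> G -> Prop) (HA : adm t mul inv e V).

Notation QT := (@QT G mul inv e V).
Notation piq := (@piq G mul inv e V).
Notation rep := (@rep G mul inv e V).
Notation dd := (@dd G mul inv e V).

Definition openY (W : QT -> Prop) : Prop := open t (fun x => W (piq x)).

Lemma openY_full : openY (fun _ => True).
Proof. apply open_full. Qed.
Lemma openY_inter U W : openY U -> openY W -> openY (fun x => U x /\ W x).
Proof. intros; apply open_inter; auto. Qed.
Lemma openY_union (F : (QT -> Prop) -> Prop) :
  (forall U, F U -> openY U) -> openY (fun x => exists U, F U /\ U x).
Proof.
  intro H. unfold openY.
  apply open_ext with (U := fun x => exists U', (exists W, F W /\ U' = fun y => W (piq y)) /\ U' x).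
  - intro x; split.
    + intros [U' [[W [FW ->]] HW]]; exists W; auto.
    + intros [W [FW HW]]; exists (fun y => W (piq y)); split; [exists W|]; auto.
  - apply open_union. intros U' [W [FW ->]]; apply H; auto.
Qed.

Definition tY : topology QT := Topology openY openY_full openY_inter openY_union.

Definition openZ (W : QT -> Prop) : Prop :=
  forall x, W (piq x) -> exists eps, 0 < eps /\ forall y, dd x y < eps -> W (piq y).

Lemma openZ_full : openZ (fun _ => True).
Proof. intros x _; exists 1; split; [lra|auto]. Qed.
Lemma openZ_inter U W : openZ U -> openZ W -> openZ (fun x => U x /\ W x).
Proof.
  intros HU HW x [Ux Wx]. destruct (HU x Ux) as [e1 [He1 H1]], (HW x Wx) as [e2 [He2 H2]].
  exists (Rmin e1 e2); split; [apply Rmin_pos; auto|].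
  intros y Hy; split; [apply H1|apply H2]; pose proof (Rmin_l e1 e2); pose proof (Rmin_r e1 e2); lra.
Qed.
Lemma openZ_union (F : (QT -> Prop) -> Prop) :
  (forall U, F U -> openZ U) -> openZ (fun x => exists U, F U /\ U x).
Proof.
  intros H x [U [FU Ux]]. destruct (H U FU x Ux) as [eps [He HU]].
  exists eps; split; auto. intros y Hy; exists U; auto.
Qed.

Definition tZ : topology QT := Topology openZ openZ_full openZ_inter openZ_union.

Definition ballZ (c : G) (r : R) : QT -> Prop := fun q => dd c (rep q) < r.

Lemma ballZ_open c r : openZ (ballZ c r).
Proof.
  intros x Hx. unfold ballZ in *. rewrite (dd_rep TG V HA) in Hx.
  exists (r - dd c x); split; [lra|]. intros y Hy. rewrite (dd_rep TG V HA).
  pose proof (dd_tri TG V c x y); lra.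
Qed.

Lemma tZ_tychonoff : tychonoff tZ.
Proof.
  split.
  - intros q1 q2 Hne.
    set (x1 := rep q1). set (x2 := rep q2).
    assert (Hr : dd x2 x1 <> 0).
    { intro H0. apply Hne. rewrite <- (@piq_rep G mul inv e V q1), <- (@piq_rep G mul inv e V q2).
      symmetry. apply (piq_eq TG V HA); auto. }
    pose proof (@dd_nonneg G mul inv e V x2 x1).
    exists (ballZ x2 (dd x2 x1)). split; [apply ballZ_open|]. unfold ballZ. split.
    + fold x2. rewrite (dd_refl TG). lra.
    + fold x1; lra.
  - intros F q HF Hq.
    set (x0 := rep q).
    assert (HF' : ~ F (piq x0)) by (unfold x0; rewrite (@piq_rep G mul inv e V); auto).
    destruct (HF x0 HF') as [eps [He Heps]].
    set (k := / eps). assert (Hk : 0 < k) by (apply Rinv_0_lt_compat; auto).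
    exists (fun q' => Rmin 1 (dd x0 (rep q') * k)). split; [|split].
    + intros q0 eps' He'.
      exists (ballZ (rep q0) (eps' * eps)). split; [apply ballZ_open|]. split.
      * unfold ballZ. rewrite (dd_refl TG). nra.
      * intros y Hy. unfold ballZ in Hy.
        pose proof (dd_tri TG V x0 (rep q0) (rep y)).
        pose proof (dd_tri TG V x0 (rep y) (rep q0)).
        rewrite (dd_sym TG V HA (rep y) (rep q0)) in H0.
        assert (Hke : eps * k = 1) by (unfold k; field; lra).
        set (D := dd (rep q0) (rep y)) in *.
        assert (D * k < eps') by nra.
        set (a := dd x0 (rep y)) in *. set (b := dd x0 (rep q0)) in *.
        assert (Hab1 : a * k - b * k <= D * k) by nra.
        assert (Hab2 : - (D * k) <= a * k - b * k) by nra.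
        unfold Rmin; destruct (Rle_dec 1 (a * k)), (Rle_dec 1 (b * k)); apply Rabs_def1; lra.
    + unfold x0. rewrite (dd_refl TG). rewrite Rmult_0_l. unfold Rmin; destruct (Rle_dec 1 0); lra.
    + intros y Fy.
      assert (eps <= dd x0 (rep y)).
      { apply Rnot_lt_le; intro Hl. apply (Heps (rep y)) in Hl. rewrite (@piq_rep G mul inv e V) in Hl. auto. }
      unfold Rmin; destruct (Rle_dec 1 (dd x0 (rep y) * k)); auto.
      exfalso. assert (eps * k <= dd x0 (rep y) * k) by (apply Rmult_le_compat_r; lra).
      assert (eps * k = 1) by (unfold k; field; lra). lra.
Qed.

Lemma tZ_weight : lindelof t -> weight_le omega_t tZ.
Proof.
  intro HL.
  pose (cseq := fun n => proj1_sig (constructive_indefinite_description _ (separable TG V HA HL n))).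
  assert (Hc : forall n y, exists j, V n (mul (inv (cseq n j)) y)).
  { intros n y. unfold cseq. destruct (constructive_indefinite_description _ _); simpl; auto. }
  set (ball := fun k : nat => ballZ (cseq (S (fst (Cantor.of_nat k))) (snd (Cantor.of_nat k))) (w (fst (Cantor.of_nat k)))).
  exists (fun W => exists k, W = ball k). split.
  - split.
    + intros W [k ->]. apply ballZ_open.
    + intros U q HU Uq.
      set (x := rep q).
      assert (Ux : U (piq x)) by (unfold x; rewrite (@piq_rep G mul inv e V); auto).
      destruct (HU x Ux) as [eps [He Heps]].
      destruct (w_small (eps / 2)) as [n Hn]; [lra|].
      destruct (Hc (S n) x) as [j Hj].
      pose proof (dd_Vn TG V _ _ _ Hj) as Hd.
      rewrite w_S in Hd. pose proof (w_pos n).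
      exists (ball (Cantor.to_nat (n, j))). split; [exists (Cantor.to_nat (n, j)); reflexivity|].
      unfold ball. rewrite Cantor.cancel_of_to; simpl. split.
      * unfold ballZ. fold x. lra.
      * intros q' Hq'. unfold ballZ in Hq'.
        rewrite <- (@piq_rep G mul inv e V q'). apply Heps.
        pose proof (dd_tri TG V x (cseq (S n) j) (rep q')).
        rewrite (dd_sym TG V HA x (cseq (S n) j)) in H0. lra.
  - exists (fun W : {A : QT -> Prop | exists k, A = ball k} => (proj1_sig (constructive_indefinite_description _ (proj2_sig W)) : omega_t)).
    intros [a Ha] [b Hb]; simpl.
    destruct (constructive_indefinite_description _ Ha) as [ka Ea]; destruct (constructive_indefinite_description _ Hb) as [kb Eb]; simpl.
    intro; subst; auto.
Qed.

Lemma quotient_nw : lindelof t -> stable omega_t t -> netweight_le omega_t tY.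
Proof.
  intros HL HS.
  apply (HS QT tY piq) with (Z := QT) (tZ := tZ) (g := fun q => q).
  - intros W HW; exact HW.
  - intro q; exists (rep q); apply (@piq_rep G mul inv e V).
  - intros W HW. simpl in HW |- *. unfold openY.
    apply open_of_nbhd. intros x Wx. destruct (HW x Wx) as [eps [He H]].
    exists (fun y => dd x y < eps). split; [apply (ball_open TG V HA)|]. split; [rewrite (dd_refl TG); auto|].
    auto.
  - auto.
  - intro z; exists z; auto.
  - apply tZ_tychonoff.
  - apply tZ_weight; auto.
Qed.

End QTop.

Definition enc (A : nat -> continuum_t) (S : nat -> bool) : continuum_t :=
  fun n => if Nat.even n then S (Nat.div2 n) else
    let (i, j) := Cantor.of_nat (Nat.div2 n) in A i j.

Lemma enc_inj A S A' S' : enc A S = enc A' S' -> A = A' /\ S = S'.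
Proof.
  intro H. split.
  - apply functional_extensionality; intro i; apply functional_extensionality; intro j.
    apply (f_equal (fun f => f (2 * Cantor.to_nat (i, j) + 1)%nat)) in H.
    unfold enc in H. rewrite Nat.even_odd, Nat.div2_odd', Cantor.cancel_of_to in H. exact H.
  - apply functional_extensionality; intro k.
    apply (f_equal (fun f => f (2 * k)%nat)) in H.
    unfold enc in H. rewrite Nat.even_even, Nat.div2_even in H. exact H.
Qed.

Section Main.
Context {G : Type} {t : topology G} {mul : G -> G -> G} {inv : G -> G} {e : G}
  (TG : topological_group t mul inv e).

Lemma find_O V (HA : adm t mul inv e V) W x (Vs : G -> Prop) :
  open t Vs -> Vs e -> (forall a b, Vs a -> Vs b -> W (mul x (mul a b))) ->
  (forall n, @dd G mul inv e V e n = 0 -> Vs n) ->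
  exists O, open t O /\ O x /\ (forall y, O y -> W y) /\
    (forall y y', @dd G mul inv e V y y' = 0 -> O y -> O y').
Proof.
  intros HVs Vse HW Hker.
  exists (fun y => exists v n, Vs v /\ @dd G mul inv e V e n = 0 /\ y = mul x (mul v n)).
  split; [|split; [|split]].
  - apply open_of_nbhd. intros y [v [n [Vv [Hn ->]]]].
    exists (fun z => Vs (mul (mul (inv x) z) (inv n))). split; [|split].
    + apply (open_lmul TG (inv x) (fun w => Vs (mul w (inv n)))). apply (open_rmul TG); auto.
    + rewrite (g_cancel_l TG), <- (tg_assoc TG), (tg_inv_r TG), (tg_unit_r TG); auto.
    + intros z Hz. exists (mul (mul (inv x) z) (inv n)), n. split; [auto|split; [auto|]].
      rewrite <- (tg_assoc TG (mul (inv x) z)), (tg_inv_l TG), (tg_unit_r TG), (g_cancel_l' TG); auto.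
  - exists e, e. split; [auto|split; [apply (dd_refl TG)|]]. rewrite !(tg_unit_r TG); auto.
  - intros y [v [n [Vv [Hn ->]]]]. apply HW; auto.
  - intros y y' Hd [v [n [Vv [Hn ->]]]].
    set (z := mul (inv (mul x (mul v n))) y').
    exists v, (mul n z). split; [auto|split].
    + apply Rle_antisym; [|apply (@dd_nonneg G mul inv e V)].
      unfold dd in *. rewrite (g_inv_e TG), (tg_unit_l TG) in *.
      pose proof (pp_sub TG V n z). unfold z in H |- *. lra.
    + unfold z. rewrite !(tg_assoc TG). rewrite <- !(tg_assoc TG) at 1.
      replace (mul x (mul v (mul n (mul (inv (mul x (mul v n))) y')))) with
        (mul (mul x (mul v n)) (mul (inv (mul x (mul v n))) y')).
      * rewrite (g_cancel_l' TG); auto.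
      * rewrite !(tg_assoc TG); auto.
Qed.

End Main.

Section Main2.
Context {G : Type} {t : topology G} {mul : G -> G -> G} {inv : G -> G} {e : G}
  (TG : topological_group t mul inv e).

Definition VAf (Va : continuum_t -> nat -> G -> Prop) (A : nat -> continuum_t) : nat -> G -> Prop :=
  fun n x => forall k, (k <= n)%nat -> Va (A k) n x.

Lemma lind_kernel (Va : continuum_t -> nat -> G -> Prop) :
  lindelof t -> (forall a, adm t mul inv e (Va a)) ->
  (forall y, (forall a, Va a O y) -> y = e) ->
  forall U, open t U -> U e -> exists A, forall z, @dd G mul inv e (VAf Va A) e z = 0 -> U z.
Proof.
  intros HL HA Hker U HU Ue.
  set (N' := fun a y => forall n, Va a n y).
  assert (HN : forall a, open t (fun y => ~ N' a y)).
  { intro a. apply open_of_nbhd. intros y Hy.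
    apply not_all_ex_not in Hy. destruct Hy as [n Hn].
    exists (fun z => Va a (S n) (mul (inv y) z)). split; [apply (open_lmul TG); apply (HA a (S n))|].
    split; [rewrite (tg_inv_l TG); apply (HA a)|].
    intros z Hz HNz. apply Hn.
    destruct (HA a n) as [_ [_ [_ Hc]]].
    assert (Hs : Va a (S n) (inv (mul (inv y) z))) by (apply (HA a); auto).
    specialize (Hc z (inv (mul (inv y) z)) e (HNz (S n)) Hs (proj1 (proj2 (HA a (S n))))).
    rewrite (tg_unit_r TG), (g_inv_mul TG), (g_inv_inv TG), (g_cancel_l' TG) in Hc. exact Hc. }
  destruct (HL (fun W => W = U \/ exists a, W = fun y => ~ N' a y)) as [C [HC1 [HC2 [code Hcode]]]].
  - intros W [->|[a ->]]; auto.
  - intro y. destruct (classic (U y)) as [Uy|nUy].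
    + exists U; auto.
    + assert (y <> e) by (intro; subst; auto).
      assert (exists a, ~ Va a O y).
      { apply NNPP; intro Hn. apply H. apply Hker. intro a. apply NNPP. intro. apply Hn; eauto. }
      destruct H0 as [a Ha]. exists (fun y => ~ N' a y). split; [right; eauto|].
      intro Hy; apply Ha, Hy.
  - set (A := fun k => epsilon (inhabits (fun _ : nat => false))
      (fun a => exists W (H : C W), code (exist _ W H) = k /\ W = fun y => ~ N' a y)).
    exists A. intros z Hz.
    destruct (HC2 z) as [W [CW Wz]].
    destruct (HC1 W CW) as [->|[a Ea]]; auto.
    exfalso.
    set (k := code (exist _ W CW)).
    set (P := fun a => exists W0 (H : C W0), code (exist _ W0 H) = k /\ W0 = fun y => ~ N' a y).
    assert (HP : exists a, P a) by (exists a; exists W, CW; auto).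
    pose proof (epsilon_spec (inhabits (fun _ : nat => false)) P HP) as [W0 [H0 [Hc Ht]]].
    apply Hcode in Hc; simpl in Hc. subst W0.
    assert (HAA : adm t mul inv e (VAf Va A)) by (apply (adm_inter TG); intro; apply HA).
    assert (Hall : forall n, VAf Va A n z).
    { intro n. pose proof (dd_small TG (VAf Va A) HAA e z n) as Hs.
      rewrite (g_inv_e TG), (tg_unit_l TG) in Hs. apply Hs. rewrite Hz. apply w_pos. }
    rewrite Ht in Wz. apply Wz. intro n.
    change (epsilon (inhabits (fun _ : nat => false)) P) with (A k).
    destruct (le_lt_dec k n) as [Hkn|Hnk].
    + apply (Hall n k Hkn).
    + apply (adm_mono TG _ (HA (A k)) n k); [lia|]. apply (Hall k k). lia.
Qed.

Lemma counting (VA : (nat -> continuum_t) -> nat -> G -> Prop) :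
  lindelof t -> stable omega_t t -> (forall A, adm t mul inv e (VA A)) ->
  (forall W x, open t W -> W x -> exists A O, open t O /\ O x /\ (forall y, O y -> W y) /\
     (forall y y', @dd G mul inv e (VA A) y y' = 0 -> O y -> O y')) ->
  weight_le continuum_t t.
Proof.
  intros HL HS HA Hloc.
  assert (HN : forall A, netweight_le omega_t (@tY G t mul inv e (VA A))) by (intro A; apply (quotient_nw TG (VA A) (HA A)); auto).
  set (Nw := fun A => proj1_sig (constructive_indefinite_description _ (HN A))).
  assert (HNw : forall A, is_network (@tY G t mul inv e (VA A)) (Nw A) /\ card_le omega_t (Nw A)).
  { intro A; unfold Nw; destruct (constructive_indefinite_description _ _); simpl; auto. }
  set (code := fun A => proj1_sig (constructive_indefinite_description _ (proj2 (HNw A)))).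
  assert (Hcode : forall A a b, code A a = code A b -> proj1_sig a = proj1_sig b).
  { intro A; unfold code; destruct (constructive_indefinite_description _ _); simpl; auto. }
  set (sat := fun A (O : G -> Prop) => forall y y', @dd G mul inv e (VA A) y y' = 0 -> O y -> O y').
  set (Sprop := fun A (O : G -> Prop) k => exists V (H : Nw A V), code A (exist _ V H) = k /\
                   forall x, V (@piq G mul inv e (VA A) x) -> O x).
  assert (Hsub : forall A O O', open t O -> sat A O -> (forall k, Sprop A O k -> Sprop A O' k) ->
                   forall x, O x -> O' x).
  { intros A O O' HO SO HS' x Ox.
    set (Wq := fun q => O (@rep G mul inv e (VA A) q)).
    assert (HOq : forall y, O (@rep G mul inv e (VA A) (@piq G mul inv e (VA A) y)) <-> O y).
    { intro y. split; intro H.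
      - apply (SO (@rep G mul inv e (VA A) (@piq G mul inv e (VA A) y)) y); auto. rewrite (dd_sym TG (VA A) (HA A)), (dd_rep TG (VA A) (HA A)). apply (dd_refl TG).
      - apply (SO y); auto. rewrite (dd_rep TG (VA A) (HA A)). apply (dd_refl TG). }
    assert (HWq : open (@tY G t mul inv e (VA A)) Wq).
    { simpl. unfold openY. apply open_ext with (U := O); auto. intro y; unfold Wq; rewrite HOq; tauto. }
    destruct (proj1 (HNw A) Wq (@piq G mul inv e (VA A) x) HWq) as [V [NV [Vx HV]]].
    { unfold Wq; rewrite HOq; auto. }
    destruct (HS' (code A (exist _ V NV))) as [V' [NV' [Hc HV']]].
    { exists V, NV. split; auto. intros y Vy. apply HOq. apply HV; auto. }
    apply Hcode in Hc; simpl in Hc; subst V'. apply HV'; auto. }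
  set (B := fun O => open t O /\ exists A, sat A O).
  exists B. split.
  - split; [intros V [HV _]; auto|].
    intros W x HW Wx. destruct (Hloc W x HW Wx) as [A [O [HO [Ox [OW SO]]]]].
    exists O. split; [split; auto; exists A; auto|auto].
  - set (Aof := fun (O : {O | B O}) => proj1_sig (constructive_indefinite_description _ (proj2 (proj2_sig O)))).
    assert (HAof : forall O, sat (Aof O) (proj1_sig O)).
    { intro O; unfold Aof; destruct (constructive_indefinite_description _ _); simpl; auto. }
    set (Sof := fun (O : {O | B O}) k => if excluded_middle_informative (Sprop (Aof O) (proj1_sig O) k) then true else false).
    exists (fun O => enc (Aof O) (Sof O)).
    intros a b Hab. apply enc_inj in Hab. destruct Hab as [HAeq HSeq].
    assert (Hk : forall k, Sprop (Aof a) (proj1_sig a) k <-> Sprop (Aof a) (proj1_sig b) k).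
    { intro k. apply (f_equal (fun f => f k)) in HSeq. unfold Sof in HSeq.
      rewrite <- HAeq in HSeq.
      destruct (excluded_middle_informative (Sprop (Aof a) (proj1_sig a) k)),
               (excluded_middle_informative (Sprop (Aof a) (proj1_sig b) k)); try discriminate; tauto. }
    assert (Sb : sat (Aof a) (proj1_sig b)) by (rewrite HAeq; apply HAof).
    apply pred_ext; intro x; split.
    + apply (Hsub (Aof a)); [apply (proj2_sig a)|apply HAof|]. intro k; apply Hk.
    + apply (Hsub (Aof a)); [apply (proj2_sig b)|auto|]. intro k; apply Hk.
Qed.

End Main2.

Theorem corollary4 (G : Type) (t : topology G) (mul : G -> G -> G)
  (inv : G -> G) (e : G) :
  topological_group t mul inv e ->
  hausdorff t -> lindelof t -> stable omega_t t ->
  pseudochar_le continuum_t t ->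
  weight_le continuum_t t.
Proof.
  intros TG _ HL HS Hpsi.
  destruct (Hpsi e) as [P [HP1 [HP2 [HP3 [code Hcode]]]]].
  set (U := fun (a : continuum_t) y => forall W (H : P W), code (exist _ W H) = a -> W y).
  assert (HU : forall a, open t (U a) /\ U a e).
  { intro a. split; [|intros W H _; apply HP2; auto].
    destruct (classic (exists W (H : P W), code (exist _ W H) = a)) as [[W [H Hc]]|Hn].
    - apply open_ext with (U := W); [|apply HP1; auto].
      intro y; split.
      + intros Wy W' H' Hc'. rewrite <- Hc' in Hc. apply Hcode in Hc; simpl in Hc. subst; auto.
      + intro Hy; apply (Hy W H Hc).
    - apply open_ext with (U := fun _ : G => True); [|apply open_full].
      intro y; split; auto. intros _ W H Hc; exfalso; apply Hn; eauto. }
  assert (Hint : forall y, (forall a, U a y) -> y = e).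
  { intros y Hy. apply HP3. intros W H. apply (Hy (code (exist _ W H)) W H). auto. }
  assert (Hseq : forall a, exists V, adm t mul inv e V /\ forall x, V O x -> U a x).
  { intro a; destruct (HU a); apply (exists_seq TG); auto. }
  set (Va := fun a => proj1_sig (constructive_indefinite_description _ (Hseq a))).
  assert (HVa : forall a, adm t mul inv e (Va a) /\ forall x, Va a O x -> U a x).
  { intro a; unfold Va; destruct (constructive_indefinite_description _ _); simpl; auto. }
  apply (@counting G t mul inv e TG (VAf Va)); auto.
  - intro A. apply (adm_inter TG). intro k; apply HVa.
  - intros W x HW Wx.
    assert (HW' : open t (fun z => W (mul x z))) by (apply (open_lmul TG); auto).
    assert (W'e : W (mul x e)) by (rewrite (tg_unit_r TG); auto).
    destruct (nbhd2 TG _ HW' W'e) as [Vs [HVs [Vse HVs2]]].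
    destruct (lind_kernel TG Va HL (fun a => proj1 (HVa a))) with (U := Vs) as [A HA]; auto.
    { intros y Hy. apply Hint. intro a. apply HVa. auto. }
    assert (HAA : adm t mul inv e (VAf Va A)) by (apply (adm_inter TG); intro k; apply HVa).
    exists A. apply (find_O TG (VAf Va A) HAA W x Vs); auto.
Qed.
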